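(* Let $1\le k<n$ be integers and $K=\{p\in[0,1]^n:\sum_i p_i=k\}$. For $U\subseteq[n]$ with $|U|=k$ define $$g_U(x)=\frac{1}{n-k}\Big(\prod_{i\in U}x_i\Big)\Big(\prod_{i\notin U}(1-x_i)\Big)\Big(\sum_{i\notin U}x_i\Big),\qquad f_U(x)=\frac{g_U(x)}{\sum_{V\subseteq[n],|V|=k}g_V(x)},$$ and let $e_V\in\{0,1\}^n$ denote the indicator vector of $V$. Define $\overline f_U:K\to[0,1]$ by $\overline f_U(x)=f_U(x)$ if $x\in K$ is not of the form $e_V$ for any $V$ with $|V|=k$, $\overline f_U(e_U)=1$, and $\overline f_U(e_V)=0$ for $|V|=k$, $V\neq U$. Then $\overline f_U$ is well defined (i.e. the denominator of $f_U$ is nonzero at every point of $K$ not of the form $e_V$) and is continuous on all of $K$. *)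

(* Defs.v *)
(* Points of [0,1]^n are row vectors 'rV[R]_n
   (entries x 0 i), carrying the product topology from matrix_topology. *)
From HB Require Import structures.
From mathcomp Require Import all_boot all_order all_algebra.
From mathcomp Require Import all_classical all_reals all_analysis.
Set Implicit Arguments. Unset Strict Implicit. Unset Printing Implicit Defensive.
Import Order.TTheory GRing.Theory Num.Theory.
Import numFieldNormedType.Exports.
Local Open Scope ring_scope.
Local Open Scope classical_set_scope.

Section Defs.
Variables (R : realType) (n k : nat).

Definition Kset : set 'rV[R]_n :=
  [set p | (forall i : 'I_n, 0 <= p 0 i <= 1) /\ \sum_(i < n) p 0 i = k%:R].

Definition gU (U : {set 'I_n}) (x : 'rV[R]_n) : R :=
  ((n - k)%:R)^-1 * (\prod_(i in U) x 0 i) * (\prod_(i in ~: U) (1 - x 0 i))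
    * (\sum_(i in ~: U) x 0 i).

Definition gsum (x : 'rV[R]_n) : R := \sum_(V : {set 'I_n} | #|V| == k) gU V x.

Definition fU (U : {set 'I_n}) (x : 'rV[R]_n) : R := gU U x / gsum x.

Definition ind (V : {set 'I_n}) : 'rV[R]_n := \row_(i < n) (i \in V)%:R.

Definition is_vertex (x : 'rV[R]_n) : bool :=
  [exists V : {set 'I_n}, (#|V| == k) && (x == ind V)].

Definition fbarU (U : {set 'I_n}) (x : 'rV[R]_n) : R :=
  if is_vertex x then (if x == ind U then 1 else 0) else fU U x.

End Defs.

(* Main.v *)
Require Import Defs.
From HB Require Import structures.
From mathcomp Require Import all_boot all_order all_algebra.
From mathcomp Require Import all_classical all_reals all_analysis.
From mathcomp Require Import ring lra.
Import Order.TTheory GRing.Theory Num.Theory.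
Import numFieldNormedType.Exports.
Local Open Scope ring_scope.
Local Open Scope classical_set_scope.

Section H.
Variables (R : realType) (n k : nat).
Implicit Types f g : 'rV[R]_n -> R.
Implicit Types U V W : {set 'I_n}.

Lemma contM f g : continuous f -> continuous g -> continuous (fun x => f x * g x).
Proof. by move=> cf cg x; exact: (cvgM (cf x) (cg x)). Qed.
Lemma contD f g : continuous f -> continuous g -> continuous (fun x => f x + g x).
Proof. by move=> cf cg x; exact: (cvgD (cf x) (cg x)). Qed.
Lemma contB f g : continuous f -> continuous g -> continuous (fun x => f x - g x).
Proof. by move=> cf cg x; exact: (cvgB (cf x) (cg x)). Qed.
Lemma contC (c : R) : continuous (fun _ : 'rV[R]_n => c).
Proof. exact: cst_continuous. Qed.
Lemma contP (I : finType) (P : pred I) (h : I -> 'rV[R]_n -> R) :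
  (forall i, continuous (h i)) -> continuous (fun x => \prod_(i | P i) h i x).
Proof. move=> hc; exact: (@continuous_big R I *%R 1 P (@mul_continuous R) _ (index_enum I) h (fun i _ => hc i)). Qed.
Lemma contS (I : finType) (P : pred I) (h : I -> 'rV[R]_n -> R) :
  (forall i, continuous (h i)) -> continuous (fun x => \sum_(i | P i) h i x).
Proof. move=> hc; exact: (@continuous_big R I +%R 0 P (add_continuous) _ (index_enum I) h (fun i _ => hc i)). Qed.
Lemma contco (i : 'I_n) : continuous (fun x : 'rV[R]_n => x 0 i).
Proof. exact: coord_continuous. Qed.

Lemma cont_gU V : continuous (@gU R n k V).
Proof.
rewrite /gU; apply: contM; [apply: contM; [apply: contM|]|].
- exact: contC.
- apply: contP => i; exact: contco.
- apply: contP => i; apply: contB; [exact: contC| exact: contco].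
- apply: contS => i; exact: contco.
Qed.
Lemma cont_gsum : continuous (@gsum R n k).
Proof. by apply: contS => V; exact: cont_gU. Qed.

Lemma split_sum (A : {set 'I_n}) (y : 'rV[R]_n) :
  \sum_(i < n) y 0 i = \sum_(i in A) y 0 i + \sum_(i in ~: A) y 0 i.
Proof.
rewrite (bigID (mem A)) /=; congr (_ + _); apply: eq_bigl => i; by rewrite !inE.
Qed.

Lemma sum1m (A : {set 'I_n}) (y : 'rV[R]_n) :
  \sum_(i in A) (1 - y 0 i) = #|A|%:R - \sum_(i in A) y 0 i.
Proof. by rewrite sumrB sumr_const. Qed.

Lemma exists_sub_card (C : {set 'I_n}) m : (m <= #|C|)%N ->
  exists D : {set 'I_n}, D \subset C /\ #|D| = m.
Proof.
elim: m => [|m IH] hm.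
  by exists finset.set0; split; [exact: finset.sub0set|exact: cards0].
have [D [DC cD]] := IH (ltnW hm).
have : ~~ (C \subset D).
  apply/negP => /subset_leq_card; rewrite cD => h.
  by move: (leq_trans hm h); rewrite ltnn.
case/fintype.subsetPn => c cC cD'.
exists (c |: D); split; first by rewrite finset.subUset finset.sub1set cC DC.
by rewrite cardsU1 cD' cD.
Qed.

Definition box (y : 'rV[R]_n) := forall i, 0 <= y 0 i <= 1.

Lemma gU_ge0 (V : {set 'I_n}) y : box y -> 0 <= @gU R n k V y.
Proof.
move=> hb; rewrite /gU; apply: mulr_ge0; [apply: mulr_ge0; [apply: mulr_ge0|]|].
- by rewrite invr_ge0 ler0n.
- by apply: prodr_ge0 => i _; case/andP: (hb i).
- by apply: prodr_ge0 => i _; case/andP: (hb i) => _ h; rewrite subr_ge0.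
- by apply: sumr_ge0 => i _; case/andP: (hb i).
Qed.

Lemma gsum_ge_term (V : {set 'I_n}) y : #|V| = k -> box y -> @gU R n k V y <= @gsum R n k y.
Proof.
move=> cV hb; rewrite /gsum (bigD1 V) /=; last by rewrite cV.
rewrite lerDl; apply: sumr_ge0 => W _; exact: gU_ge0.
Qed.


Lemma gsum_pos x : (k < n)%N -> @Kset R n k x ->
  (forall V : {set 'I_n}, #|V| = k -> x <> ind R V) -> 0 < @gsum R n k x.
Proof.
move=> kn [hb hs] hnv.
set A := finset (fun i : 'I_n => x 0 i == 1); set B := finset (fun i : 'I_n => x 0 i != 0).
have AB : A \subset B.
  by apply/fintype.subsetP => i; rewrite !inE => /eqP ->; exact: oner_neq0.
have sA : \sum_(i in A) x 0 i = #|A|%:R.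
  rewrite -sumr_const; apply: eq_bigr => i; by rewrite inE => /eqP.
have cA : (#|A| <= k)%N.
  rewrite -(ler_nat R) -sA -hs (split_sum A) lerDl.
  by apply: sumr_ge0 => i _; case/andP: (hb i).
have sB : \sum_(i in B) x 0 i = k%:R.
  rewrite -hs (split_sum B) [X in _ = _ + X]big1 ?addr0 // => i.
  by rewrite !inE negbK => /eqP.
have cB : (k < #|B|)%N.
  rewrite ltnNge; apply/negP => hle.
  have h0 : \sum_(i in B) (1 - x 0 i) == 0.
    rewrite eq_le; apply/andP; split.
      by rewrite sum1m sB subr_le0 ler_nat.
    by apply: sumr_ge0 => i _; case/andP: (hb i) => _ h; rewrite subr_ge0.
  have h1 : forall i, i \in B -> x 0 i = 1.
    have hge : forall l, l \in B -> 0 <= 1 - x 0 l.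
      by move=> l _; case/andP: (hb l) => _ h'; rewrite subr_ge0.
    move=> i iB; have /eqP := psumr_eq0P hge (eqP h0) iB.
    by rewrite subr_eq0 eq_sym => /eqP.
  have cBk : #|B| = k.
    apply/eqP; rewrite -(eqr_nat R) -sB -sumr_const; apply/eqP.
    by apply: eq_bigr => i iB; rewrite h1.
  apply: (hnv B cBk); apply/rowP => i; rewrite mxE.
  case: (boolP (i \in B)) => iB; first by rewrite h1.
  by move: iB; rewrite inE negbK => /eqP ->.
have [D [DBA cD]] : exists D : {set 'I_n}, D \subset B :\: A /\ #|D| = (k - #|A|)%N.
  apply: exists_sub_card.
  rewrite cardsD (finset.setIidPr AB); exact: leq_sub2r (ltnW cB).
set V := A :|: D.
have AD0 : A :&: D = finset.set0.
  apply/setP => i; rewrite !inE; apply/negP => /andP [iA iD].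
  by have := fintype.subsetP DBA i iD; rewrite !inE iA.
have cV : #|V| = k by rewrite cardsU AD0 cards0 subn0 cD subnKC.
have [j jB jV] : exists2 j, j \in B & j \notin V.
  apply/fintype.subsetPn; apply/negP => /subset_leq_card; rewrite cV => h.
  by move: (leq_trans cB h); rewrite ltnn.
apply: (lt_le_trans _ (gsum_ge_term V x cV hb)).
rewrite /gU; apply: mulr_gt0; [apply: mulr_gt0; [apply: mulr_gt0|]|].
- by rewrite invr_gt0 ltr0n subn_gt0.
- apply: prodr_gt0 => i; rewrite inE => /orP [iA | iD].
    by rewrite inE in iA; rewrite (eqP iA) ltr01.
  have := fintype.subsetP DBA i iD; rewrite !inE => /andP [_ nz].
  by rewrite lt0r nz; case/andP: (hb i).
- apply: prodr_gt0 => i; rewrite inE /V inE negb_or => /andP [nA _].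
  rewrite inE in nA; rewrite subr_gt0 lt_neqAle nA; by case/andP: (hb i).
- rewrite (bigD1 j) /=; last by rewrite inE.
  have : 0 < x 0 j by rewrite inE in jB; rewrite lt0r jB; case/andP: (hb j).
  have : 0 <= \sum_(i in ~: V | i != j) x 0 i.
    by apply: sumr_ge0 => i _; case/andP: (hb i).
  lra.
Qed.


Definition cc : R := ((n - k)%:R)^-1.
Definition sV (V : {set 'I_n}) (y : 'rV[R]_n) := \sum_(i in ~: V) y 0 i.
Definition PQ (V : {set 'I_n}) (y : 'rV[R]_n) :=
  (\prod_(i in V) y 0 i) * (\prod_(i in ~: V) (1 - y 0 i)).

Lemma gU_PQ V y : @gU R n k V y = cc * PQ V y * sV V y.
Proof. by rewrite /gU /PQ /sV !mulrA. Qed.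

Lemma cc_ge0 : 0 <= cc.
Proof. by rewrite /cc invr_ge0 ler0n. Qed.

Lemma diff_elem (V W : {set 'I_n}) : #|V| = #|W| -> W != V ->
  exists2 j, j \in W & j \notin V.
Proof.
move=> cVW ne; apply/fintype.subsetPn; apply/negP => WV; move/negP: ne; apply.
by rewrite finset.eqEcard WV cVW leqnn.
Qed.

Lemma sV_ge0 V y : box y -> 0 <= sV V y.
Proof. by move=> hb; apply: sumr_ge0 => i _; case/andP: (hb i). Qed.

Lemma gW_bound (V W : {set 'I_n}) y : #|V| = k -> #|W| = k -> W != V ->
  @Kset R n k y -> @gU R n k W y <= cc * sV V y * sV V y * k%:R.
Proof.
move=> cV cW ne [hb hs].
have [j jW jV] := @diff_elem V W (etrans cV (esym cW)) ne.
have [i iV iW] : exists2 i, i \in V & i \notin W.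
  by apply: diff_elem; [rewrite cV cW | rewrite eq_sym].
have hP0 : 0 <= \prod_(l in W) y 0 l.
  by apply: prodr_ge0 => l _; case/andP: (hb l).
have hQ0 : 0 <= \prod_(l in ~: W) (1 - y 0 l).
  by apply: prodr_ge0 => l _; case/andP: (hb l) => _ h; rewrite subr_ge0.
have hP : \prod_(l in W) y 0 l <= y 0 j.
  rewrite (bigD1 j) //=; apply: ler_piMr; first by case/andP: (hb j).
  by apply: prodr_ile1 => l _; exact: hb.
have hQ : \prod_(l in ~: W) (1 - y 0 l) <= 1 - y 0 i.
  rewrite (bigD1 i) /=; last by rewrite inE.
  apply: ler_piMr; first by case/andP: (hb i) => _ h; rewrite subr_ge0.
  apply: prodr_ile1 => l _; case/andP: (hb l) => h1 h2.
  by rewrite subr_ge0 h2 /= lerBlDr lerDl.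
have hS : \sum_(l in ~: W) y 0 l <= k%:R.
  rewrite -hs (split_sum W) lerDr.
  by apply: sumr_ge0 => l _; case/andP: (hb l).
have hj : y 0 j <= sV V y.
  rewrite /sV (bigD1 j) /=; last by rewrite inE.
  by rewrite lerDl; apply: sumr_ge0 => l _; case/andP: (hb l).
have hi : 1 - y 0 i <= sV V y.
  have e : \sum_(l in V) (1 - y 0 l) = sV V y.
    rewrite sum1m cV /sV; move: hs; rewrite (split_sum V); lra.
  rewrite -e (bigD1 i) //=; rewrite lerDl.
  by apply: sumr_ge0 => l _; case/andP: (hb l) => _ h; rewrite subr_ge0.
rewrite /gU; apply: ler_pM; last exact: hS.
- by apply: mulr_ge0 => //; apply: mulr_ge0 => //; exact: cc_ge0.
- by apply: sumr_ge0 => l _; case/andP: (hb l).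
apply: ler_pM; last exact: le_trans hQ hi.
- by apply: mulr_ge0 => //; exact: cc_ge0.
- done.
apply: ler_wpM2l; first exact: cc_ge0.
exact: le_trans hP hj.
Qed.


Lemma ind_inj (V W : {set 'I_n}) : (ind R V == ind R W) = (V == W).
Proof.
apply/eqP/eqP => [h|->//]; apply/setP => i.
have := congr1 (fun M : 'rV[R]_n => M 0 i) h; rewrite !mxE => /eqP.
by rewrite eqr_nat; case: (i \in V); case: (i \in W).
Qed.

Lemma is_vertex_ind V : #|V| = k -> @is_vertex R n k (ind R V).
Proof. by move=> cV; apply/existsP; exists V; rewrite cV !eqxx. Qed.

Lemma fbar_ind U V : #|V| = k -> @fbarU R n k U (ind R V) = (V == U)%:R.
Proof. by move=> cV; rewrite /fbarU (is_vertex_ind V cV) ind_inj; case: (V == U). Qed.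

Lemma vertex_eq y : @is_vertex R n k y -> exists W, #|W| = k /\ y = ind R W.
Proof. by case/existsP => W /andP [/eqP cW /eqP ->]; exists W. Qed.

Lemma PQ_ind_other V W : W != V -> #|V| = k -> #|W| = k -> PQ V (ind R W) = 0.
Proof.
move=> ne cV cW.
have [i iV iW] : exists2 i, i \in V & i \notin W.
  by apply: diff_elem; [rewrite cV cW | rewrite eq_sym].
by rewrite /PQ (bigD1 i) //= mxE (negbTE iW) !mul0r.
Qed.

Lemma PQ_ind V : PQ V (ind R V) = 1.
Proof.
rewrite /PQ !big1 ?mulr1 // => i; rewrite ?inE mxE.
  by move=> /negbTE ->; rewrite subr0.
by move=> ->.
Qed.

Lemma sV_ind V : sV V (ind R V) = 0.
Proof. by rewrite /sV big1 // => i; rewrite inE mxE => /negbTE ->. Qed.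

Definition Mv (V : {set 'I_n}) : R :=
  \sum_(W : {set 'I_n} | (#|W| == k) && (W != V)) (cc * k%:R).
Definition Cst V := 2 * Mv V / cc.

Lemma Cst_ge0 V : 0 <= Cst V.
Proof.
rewrite /Cst; apply: divr_ge0; last exact: cc_ge0.
apply: mulr_ge0 => //; apply: sumr_ge0 => W _; apply: mulr_ge0 => //.
exact: cc_ge0.
Qed.

Lemma nonvertex_ne y : ~~ @is_vertex R n k y ->
  forall W : {set 'I_n}, #|W| = k -> y <> ind R W.
Proof. by move=> hv W cW e; move: hv; rewrite e is_vertex_ind. Qed.

Lemma vertex_est U V y : (k < n)%N -> #|U| = k -> #|V| = k ->
  @Kset R n k y -> 1/2 <= PQ V y ->
  `|(V == U)%:R - @fbarU R n k U y| <= Cst V * sV V y.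
Proof.
move=> kn cU cV hK hPQ.
have hb : box y by case: hK.
have s0 := sV_ge0 V y hb.
have C0 := Cst_ge0 V.
case: (boolP (@is_vertex R n k y)) => hv.
  have [W [cW ey]] := vertex_eq y hv; rewrite ey in hPQ *.
  case: (eqVneq W V) => [-> | ne].
    by rewrite fbar_ind // subrr normr0 sV_ind mulr0.
  by rewrite PQ_ind_other // in hPQ; lra.
have g0 : 0 < @gsum R n k y := gsum_pos y kn hK (nonvertex_ne y hv).
rewrite /fbarU (negbTE hv) /fU.
set T := \sum_(W : {set 'I_n} | (#|W| == k) && (W != V)) @gU R n k W y.
have eg : @gsum R n k y = @gU R n k V y + T.
  by rewrite /gsum (bigD1 V) //= cV eqxx.
have cc0 : 0 < cc by rewrite /cc invr_gt0 ltr0n subn_gt0.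
set s := sV V y.
have hT : T <= Mv V * (s * s).
  rewrite /Mv mulr_suml; apply: ler_sum => W /andP [/eqP cW ne].
  have := gW_bound V W y cV cW ne hK; rewrite -/s => h.
  apply: (le_trans h); rewrite le_eqVlt; apply/orP; left; apply/eqP; ring.
have hgV : cc * s / 2 <= @gU R n k V y.
  rewrite gU_PQ -/s.
  have -> : cc * PQ V y * s = (cc * s) * PQ V y by ring.
  have -> : cc * s / 2 = (cc * s) * (1 / 2) by ring.
  by apply: ler_wpM2l => //; apply: mulr_ge0 => //; exact: ltW.
have e1 : Cst V * cc = 2 * Mv V by rewrite /Cst divfK // gt_eqF.
have key : T <= Cst V * s * @gsum R n k y.
  have hCs : 0 <= Cst V * s by apply: mulr_ge0.
  have h2 : Cst V * s * (cc * s / 2) <= Cst V * s * @gsum R n k y.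
    apply: ler_wpM2l => //; apply: (le_trans hgV); rewrite eg lerDl.
    by apply: sumr_ge0 => W _; exact: gU_ge0.
  have e2 : Cst V * s * (cc * s / 2) = Mv V * (s * s).
    have -> : Cst V * s * (cc * s / 2) = (Cst V * cc) * (s * s) / 2 by ring.
    by rewrite e1; field.
  by rewrite e2 in h2; exact: le_trans hT h2.
case: (eqVneq V U) => [eVU | nVU].
  subst U.
  have gle : @gU R n k V y / @gsum R n k y <= 1.
    by rewrite ler_pdivrMr // mul1r eg lerDl; apply: sumr_ge0 => W _; exact: gU_ge0.
  rewrite ger0_norm ?subr_ge0 //.
  have -> : 1 - @gU R n k V y / @gsum R n k y = T / @gsum R n k y.
    rewrite -[X in X - _](divff (negbT (gt_eqF g0))) -mulrBl; congr (_ / _).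
    by rewrite eg; ring.
  by rewrite ler_pdivrMr.
rewrite (_ : (false%:R : R) = 0) // sub0r normrN ger0_norm; last first.
  by apply: divr_ge0; [exact: gU_ge0 | exact: ltW].
rewrite ler_pdivrMr //; apply: le_trans key.
rewrite /T (bigD1 U) /=; last by rewrite cU eqxx eq_sym.
by rewrite lerDl; apply: sumr_ge0 => W _; exact: gU_ge0.
Qed.


Lemma part_b U : (k < n)%N -> #|U| = k ->
  forall x, @Kset R n k x -> 0 <= @fbarU R n k U x <= 1.
Proof.
move=> kn cU x hK; rewrite /fbarU; case: ifP => hv.
  by case: ifP => _; rewrite ?ler01 ?lexx.
have g0 := gsum_pos x kn hK (nonvertex_ne x (negbT hv)).
have hb : box x by case: hK.
rewrite /fU; apply/andP; split; first by apply: divr_ge0; [exact: gU_ge0 | exact: ltW].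
rewrite ler_pdivrMr // mul1r.
exact: gsum_ge_term.
Qed.

Lemma cont_PQ V : continuous (PQ V).
Proof.
apply: contM; first by apply: contP => i; exact: contco.
by apply: contP => i; apply: contB; [exact: contC | exact: contco].
Qed.

Lemma cont_CsV V : continuous (fun y => Cst V * sV V y).
Proof. by apply: contM; [exact: contC | apply: contS => i; exact: contco]. Qed.

Lemma gsum_ind W : #|W| = k -> @gsum R n k (ind R W) = 0.
Proof.
move=> cW; rewrite /gsum big1 // => V /eqP cV; rewrite gU_PQ.
case: (eqVneq V W) => [->|ne]; first by rewrite sV_ind mulr0.
rewrite PQ_ind_other //; last by rewrite eq_sym.
by rewrite mulr0 mul0r.
Qed.

Lemma cont_main U : (k < n)%N -> #|U| = k ->
  {within @Kset R n k, continuous (@fbarU R n k U)}.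
Proof.
move=> kn cU; apply/subspace_continuousP => x hK.
apply/cvgrPdist_le => eps e0; rewrite near_withinE.
case: (boolP (@is_vertex R n k x)) => hv.
  have [V [cV ex]] := vertex_eq x hv; rewrite /from_subspace ex fbar_ind //.
  have h1 : \forall y \near ind R V, 1/2 <= PQ V y.
    have := cont_PQ V (ind R V); move/cvgrPdist_le => /(_ (1/2)) h.
    have hp : (0 : R) < 1/2 by lra.
    apply: filterS (h hp) => y; rewrite PQ_ind ler_norml => /andP [_ hy].
    lra.
  have h2 : \forall y \near ind R V, Cst V * sV V y <= eps.
    have := cont_CsV V (ind R V); move/cvgrPdist_le => /(_ eps e0) h.
    apply: filterS h => y; rewrite sV_ind mulr0 sub0r normrN.
    exact: le_trans (ler_norm _).
  apply: filterS2 h1 h2 => y hy1 hy2 hKy.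
  exact: le_trans (vertex_est U V y kn cU cV hKy hy1) hy2.
have g0 := gsum_pos x kn hK (nonvertex_ne x hv).
have hf : @fU R n k U @ x --> @fU R n k U x.
  exact: (cvgM (cont_gU U x) (cvgV (lt0r_neq0 g0) (cont_gsum x))).
move/cvgrPdist_le: hf => /(_ eps e0) hf.
have hg : \forall y \near x, 0 < @gsum R n k y.
  have := cont_gsum x; move/cvgrPdist_le => /(_ (@gsum R n k x / 2)) h.
  have hp : 0 < @gsum R n k x / 2 by lra.
  apply: filterS (h hp) => y; rewrite ler_norml => /andP [_ hy].
  lra.
apply: filterS2 hf hg => y hy gy _.
have hvy : ~~ @is_vertex R n k y.
  apply/negP => /vertex_eq [W [cW ey]].
  by move: gy; rewrite ey gsum_ind // ltxx.
by rewrite /from_subspace /fbarU (negbTE hv) (negbTE hvy) /fU.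
Qed.

End H.

Theorem lemma9 (R : realType) (n k : nat) (U : {set 'I_n}) :
  (1 <= k)%N -> (k < n)%N -> #|U| = k ->
  (forall x : 'rV[R]_n, @Kset R n k x ->
     (forall V : {set 'I_n}, #|V| = k -> x <> ind R V) ->
     @gsum R n k x != 0)
  /\ (forall x : 'rV[R]_n, @Kset R n k x -> 0 <= @fbarU R n k U x <= 1)
  /\ {within @Kset R n k, continuous (@fbarU R n k U)}.
Proof.
move=> _ kn cU; split; last split.
- by move=> x hK hnv; apply: lt0r_neq0; exact: gsum_pos.
- exact: part_b.
- exact: cont_main.
Qed.
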